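(* Let $x_0\in\mathbb{R}^2$, $r_0>0$, and let $E$ be a relatively closed subset of $B(x_0,r_0)$ that contains $x_0$ and separates $B(x_0,r_0)$. (1) For all $x\in E\cap B(x_0,r_0)$ and $\gamma>0$ such that $B(x,\gamma r_0)\subset B(x_0,r_0)$ and $\beta_E(x_0,r_0)\le\gamma/4$, the set $E$ separates $B(x,\gamma r_0)$. (2) Assume $\beta_E(x_0,r_0)\le1/100$. Let $x\in E\cap B(x_0,9r_0/10)$ and $r^x_0\ge r_0/10$ be such that $B(x,r^x_0)\subset B(x_0,r_0)$, and let $0<r\le r^x_0$ be such that $\beta_E(x,t)\le1/8$ for all $t\in[r,r^x_0]$. Then $E$ separates $B(x,r)$.
   Context: $B(x,r)$ is the open ball. For a set $F$ and $x\in F$, $\beta_F(x,r)=r^{-1}\inf_\ell\sup_{y\in F\cap B(x,r)}\mathrm{dist}(y,\ell)$, infimum over lines $\ell$ through $x$ (attained). With $\nu(x,r)$ a unit normal of a minimizing line and $D^\pm_t(x,r)=\{z\in B(x,r):\pm(z-x)\cdot\nu(x,r)>t\}$, $F$ separates $B(x,r)$ if $\beta:=\beta_F(x,r)\le1/2$ and $D^+_{\beta r}(x,r)$, $D^-_{\beta r}(x,r)$ lie in distinct connected components of $B(x,r)\setminus F$ (independent of the choice of minimizing line). *)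

(* Defs.v *)
From HB Require Import structures.
From mathcomp Require Import all_boot all_order all_algebra.
From mathcomp Require Import all_classical all_reals all_analysis.
Set Implicit Arguments. Unset Strict Implicit. Unset Printing Implicit Defensive.
Import Order.TTheory GRing.Theory Num.Theory.
Import numFieldNormedType.Exports.
Local Open Scope classical_set_scope.
Local Open Scope ring_scope.

Section Plane.
Variable R : realType.
Notation pt := (R * R)%type.

Definition dot2 (u v : pt) : R := u.1 * v.1 + u.2 * v.2.
Definition sub2 (u v : pt) : pt := (u.1 - v.1, u.2 - v.2).
Definition enorm2 (u : pt) : R := Num.sqrt (dot2 u u).

Definition eball (x : pt) (r : R) : set pt := [set z | enorm2 (sub2 z x) < r].

Definition width (F : set pt) (x : pt) (r : R) (nu : pt) : R :=
  sup [set `|dot2 (sub2 y x) nu| | y in F `&` eball x r].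

Definition unit2 (nu : pt) : Prop := enorm2 nu = 1.

(* beta_F(x,r) = r^-1 inf_{lines l through x} sup_{y in F cap B(x,r)} dist(y,l);
   lines through x are parametrized by their unit normal nu, and
   dist(y, l) = |(y - x) . nu|. *)
Definition beta (F : set pt) (x : pt) (r : R) : R :=
  r^-1 * inf [set width F x r nu | nu in unit2].

Definition Dplus (x : pt) (r : R) (nu : pt) (t : R) : set pt :=
  [set z | eball x r z /\ dot2 (sub2 z x) nu > t].
Definition Dminus (x : pt) (r : R) (nu : pt) (t : R) : set pt :=
  [set z | eball x r z /\ - dot2 (sub2 z x) nu > t].

Definition is_component (A C : set pt) : Prop :=
  exists p, A p /\ C = @connected_component (R * R)%type A p.

(* F separates B(x,r): beta <= 1/2 and, for (some) unit normal nu of a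
   minimizing line, D^+_{beta r} and D^-_{beta r} lie in distinct connected
   components of B(x,r) \ F *)
Definition separates (F : set pt) (x : pt) (r : R) : Prop :=
  beta F x r <= 2^-1 /\
  exists nu, unit2 nu /\ r^-1 * width F x r nu = beta F x r /\
    exists C1 C2, is_component (eball x r `\` F) C1 /\
                  is_component (eball x r `\` F) C2 /\ C1 <> C2 /\
                  Dplus x r nu (beta F x r * r) `<=` C1 /\
                  Dminus x r nu (beta F x r * r) `<=` C2.

Definition rel_closed_in (E B : set pt) : Prop :=
  exists C : set pt, @closed (R * R)%type C /\ E = C `&` B.
End Plane.

(* Main.v *)
Set Warnings "-all".
Require Import Defs.
From HB Require Import structures.
From mathcomp Require Import all_boot all_order all_algebra.
From mathcomp Require Import all_classical all_reals all_analysis.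
From mathcomp Require Import ring lra.
Import Order.TTheory GRing.Theory Num.Theory.
Import numFieldNormedType.Exports.
Local Open Scope classical_set_scope.
Local Open Scope ring_scope.

Section Aux.
Variable R : realType.
Implicit Types (x y z c nu mu : R * R) (r : R) (F : set (R * R)).

Lemma eballE x r z : 0 < r ->
  eball x r z <-> (z.1 - x.1) * (z.1 - x.1) + (z.2 - x.2) * (z.2 - x.2) < r * r.
Proof.
move=> r0; rewrite /eball /enorm2 /dot2 /sub2 /=.
by rewrite -{1}(gtr0_norm r0) -sqrtr_sqr expr2 ltr_sqrt ?mulr_gt0.
Qed.

Lemma unit2E nu : unit2 nu <-> nu.1 * nu.1 + nu.2 * nu.2 = 1.
Proof.
rewrite /unit2 /enorm2 /dot2; split => [h|->]; last exact: sqrtr1.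
have h0 : 0 <= nu.1 * nu.1 + nu.2 * nu.2 by nra.
apply/eqP; rewrite -(eqr_sqrt h0 ler01) sqrtr1; exact/eqP.
Qed.

Lemma coord_lt x r y : 0 < r -> eball x r y ->
  `|y.1 - x.1| < r /\ `|y.2 - x.2| < r.
Proof.
move=> r0 /(eballE x r y r0).
move: (y.1 - x.1) (y.2 - x.2) => a b h.
have ha : a * a < r * r by nra.
have hb : b * b < r * r by nra.
split; rewrite ltr_norml; apply/andP; split; nra.
Qed.

Arguments coord_lt {x r y}.

Definition wset F x r nu := [set `|dot2 (sub2 y x) nu| | y in F `&` eball x r].

Lemma wset_bound F x r nu : 0 < r -> forall a, wset F x r nu a ->
  a <= r * (`|nu.1| + `|nu.2|).
Proof.
move=> r0 a [y [Fy By] <-]; have [h1 h2] := coord_lt r0 By.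
rewrite /dot2 /sub2 /=; apply: (le_trans (ler_normD _ _)).
rewrite !normrM mulrDr; apply: lerD; [apply: (ler_wpM2r _ (ltW h1))|apply: (ler_wpM2r _ (ltW h2))]; exact: normr_ge0.
Qed.

Lemma W_ub F x r nu y : 0 < r -> F y -> eball x r y ->
  `|dot2 (sub2 y x) nu| <= width F x r nu.
Proof.
move=> r0 Fy By; apply: ub_le_sup; last by exists y.
by exists (r * (`|nu.1| + `|nu.2|)) => a; apply: wset_bound.
Qed.

Arguments W_ub {F x r} nu {y}.

Lemma W_le F x r nu M : 0 <= M ->
  (forall y, F y -> eball x r y -> `|dot2 (sub2 y x) nu| <= M) ->
  width F x r nu <= M.
Proof.
move=> M0 h; change (sup (wset F x r nu) <= M).
have [->|ne] := eqVneq (wset F x r nu) set0; first by rewrite sup0.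
apply: ge_sup; first exact/set0P.
by move=> a [y [Fy By] <-]; apply: h.
Qed.

Lemma W_ge0 F x r nu : 0 < r -> 0 <= width F x r nu.
Proof.
move=> r0; change (0 <= sup (wset F x r nu)).
have [->|/set0P [a ha]] := eqVneq (wset F x r nu) set0; first by rewrite sup0.
have := ha; case=> y [Fy By] _; apply: le_trans (W_ub nu r0 Fy By).
exact: normr_ge0.
Qed.

Lemma W_neg F x r nu : width F x r (- nu.1, - nu.2) = width F x r nu.
Proof.
rewrite /width; congr sup; apply: eq_imagel => y _.
by rewrite /dot2 /= !mulrN -opprD normrN.
Qed.

Lemma W_lip F x r nu mu : 0 < r ->
  width F x r nu <= width F x r mu + r * (`|nu.1 - mu.1| + `|nu.2 - mu.2|).
Proof.
move=> r0; apply: W_le.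
  by apply: addr_ge0; [exact: W_ge0|apply: mulr_ge0; [exact: ltW|exact: addr_ge0]].
move=> y Fy By; have [h1 h2] := coord_lt r0 By.
have e : dot2 (sub2 y x) nu = dot2 (sub2 y x) mu +
   ((y.1 - x.1) * (nu.1 - mu.1) + (y.2 - x.2) * (nu.2 - mu.2)).
  by rewrite /dot2 /=; ring.
rewrite e; apply: (le_trans (ler_normD _ _)); apply: lerD; first exact: W_ub.
apply: (le_trans (ler_normD _ _)).
rewrite !normrM mulrDr; apply: lerD; [apply: (ler_wpM2r _ (ltW h1))|apply: (ler_wpM2r _ (ltW h2))]; exact: normr_ge0.
Qed.

Lemma hs_cont : continuous (fun t : R => Num.sqrt (1 - t * t)).
Proof.
move=> t; apply: continuous_comp; last exact: sqrt_continuous.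
apply: cvgB; first exact: cvg_cst.
by apply: cvgM; exact: cvg_id.
Qed.

Lemma f_cont F x r : 0 < r ->
  continuous (fun t : R => width F x r (t, Num.sqrt (1 - t * t))).
Proof.
move=> r0 t; apply/cvgrPdist_lt => e e0.
have e'0 : 0 < e / (4 * r) by rewrite divr_gt0 // mulr_gt0.
have H1 : \forall s \near t,
    `|Num.sqrt (1 - t * t) - Num.sqrt (1 - s * s)| < e / (4 * r).
  by move: (hs_cont t) => /cvgrPdist_lt; apply.
have H2 : \forall s \near t, `|t - s| < e / (4 * r).
  by move: (@cvg_id _ (nbhs t)) => /cvgrPdist_lt; apply.
near=> s.
have h1 : `|Num.sqrt (1 - t * t) - Num.sqrt (1 - s * s)| < e / (4 * r).
  by near: s; exact: H1.
have h2 : `|t - s| < e / (4 * r) by near: s; exact: H2.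
have L1 := W_lip F x r (t, Num.sqrt (1 - t * t)) (s, Num.sqrt (1 - s * s)) r0.
have L2 := W_lip F x r (s, Num.sqrt (1 - s * s)) (t, Num.sqrt (1 - t * t)) r0.
move: L1 L2; rewrite /= (distrC s t) (distrC (Num.sqrt (1 - s * s))).
set a := width _ _ _ _; set b := width _ _ _ _ => L1 L2.
have K : r * (`|t - s| + `|Num.sqrt (1 - t * t) - Num.sqrt (1 - s * s)|) < e.
  have -> : e = r * (e / (4 * r) * 4) by field; rewrite gt_eqF.
  rewrite ltr_pM2l //; lra.
rewrite ltr_norml; apply/andP; split; lra.
Unshelve. all: by end_near.
Qed.

Lemma W_min F x r : 0 < r -> exists nu, unit2 nu /\
  forall mu, unit2 mu -> width F x r nu <= width F x r mu.
Proof.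
move=> r0.
have [c cI minf] := @EVT_min R (fun t : R => width F x r (t, Num.sqrt (1 - t * t)))
  (-1) 1 (@le_trans _ _ 0 _ _ (lerN10 R) ler01) (continuous_subspaceT (f_cont F x r r0)).
have hupper : forall mu, unit2 mu -> 0 <= mu.2 ->
    width F x r (c, Num.sqrt (1 - c * c)) <= width F x r mu.
  move=> [m1 m2] /unit2E /= hm m20.
  have -> : m2 = Num.sqrt (1 - m1 * m1).
    by rewrite -hm addrC addKr -expr2 sqrtr_sqr ger0_norm.
  apply: minf; rewrite in_itv /=; apply/andP; split; nra.
exists (c, Num.sqrt (1 - c * c)); split.
  apply/unit2E => /=; rewrite -[Num.sqrt _ * _]expr2 sqr_sqrtr; first ring.
  move: cI; rewrite in_itv /= => /andP [h1 h2]; nra.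
move=> [m1 m2] hm; have [m20|m20] := leP 0 m2; first by apply: (hupper (m1, m2) hm).
rewrite -[width F x r (m1, m2)]W_neg; apply: hupper => /=; last lra.
by move/unit2E: hm => /= hm; apply/unit2E => /=; rewrite -hm; ring.
Qed.

Definition wS F x r := [set width F x r nu | nu in @unit2 R].

Lemma inf_le_W F x r nu : 0 < r -> unit2 nu -> inf (wS F x r) <= width F x r nu.
Proof.
move=> r0 un; apply: ge_inf; last by exists nu.
by exists 0 => a [mu _ <-]; exact: W_ge0.
Qed.

Lemma betaE F x r : 0 < r -> beta F x r * r = inf (wS F x r).
Proof. by move=> r0; rewrite /beta mulrC mulrA mulfV ?gt_eqF // mul1r. Qed.

Lemma beta_W F x r nu : 0 < r -> unit2 nu -> beta F x r * r <= width F x r nu.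
Proof. by move=> r0 un; rewrite betaE //; exact: inf_le_W. Qed.

Lemma beta_att F x r : 0 < r -> exists nu, unit2 nu /\
  r^-1 * width F x r nu = beta F x r /\ width F x r nu = beta F x r * r.
Proof.
move=> r0; have [nu [un hmin]] := W_min F x r r0.
have e : width F x r nu = beta F x r * r.
  rewrite betaE //; apply/eqP; rewrite eq_le inf_le_W // andbT.
  by apply: lb_le_inf; [exists (width F x r nu); exists nu|move=> a [mu hm <-]; exact: hmin].
exists nu; split => //; split => //.
by rewrite e mulrC -mulrA mulfV ?gt_eqF // mulr1.
Qed.

Lemma exists_w nu nu0 : unit2 nu -> unit2 nu0 -> exists w : R * R,
  [/\ w.1 * nu.1 + w.2 * nu.2 = 3/5, w.1 * w.1 + w.2 * w.2 = 1 &
      9/25 <= (w.1 * nu0.1 + w.2 * nu0.2) * (w.1 * nu0.1 + w.2 * nu0.2)].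
Proof.
move=> /unit2E h /unit2E h0.
set a := nu.1 * nu0.1 + nu.2 * nu0.2.
set b := - nu.2 * nu0.1 + nu.1 * nu0.2.
have hab : a * a + b * b = 1.
  rewrite /a /b; transitivity ((nu.1 * nu.1 + nu.2 * nu.2) * (nu0.1 * nu0.1 + nu0.2 * nu0.2)).
    ring.
  by rewrite h h0 mulr1.
have [ab|ab] := leP 0 (a * b).
  exists (3/5 * nu.1 - 4/5 * nu.2, 3/5 * nu.2 + 4/5 * nu.1) => /=; split.
  - transitivity (3/5 * (nu.1 * nu.1 + nu.2 * nu.2)); [ring|by rewrite h mulr1].
  - transitivity (nu.1 * nu.1 + nu.2 * nu.2); [by field|exact: h].
  - have -> : (3 / 5 * nu.1 - 4 / 5 * nu.2) * nu0.1 + (3 / 5 * nu.2 + 4 / 5 * nu.1) * nu0.2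
       = 3/5 * a + 4/5 * b by rewrite /a /b; ring.
    nra.
exists (3/5 * nu.1 + 4/5 * nu.2, 3/5 * nu.2 - 4/5 * nu.1) => /=; split.
- transitivity (3/5 * (nu.1 * nu.1 + nu.2 * nu.2)); [ring|by rewrite h mulr1].
- transitivity (nu.1 * nu.1 + nu.2 * nu.2); [by field|exact: h].
- have -> : (3 / 5 * nu.1 + 4 / 5 * nu.2) * nu0.1 + (3 / 5 * nu.2 - 4 / 5 * nu.1) * nu0.2
     = 3/5 * a - 4/5 * b by rewrite /a /b; ring.
  nra.
Qed.

Definition segp p q (t : R) : R * R := p + t *: (q - p).

Lemma seg_cont p q : continuous (segp p q).
Proof.
move=> t; apply: cvgD; first exact: cvg_cst.
apply: cvgZ; first exact: cvg_id. exact: cvg_cst.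
Qed.

Lemma seg_conn p q : connected [set segp p q t | t in `[0, 1]].
Proof.
apply: connected_continuous_connected; first exact: segment_connected.
exact: continuous_subspaceT (seg_cont p q).
Qed.

Lemma star_comp A D p : D p -> D `<=` A ->
  (forall q t, D q -> 0 <= t -> t <= 1 -> D (segp p q t)) ->
  D `<=` connected_component A p.
Proof.
move=> Dp DA hst q Dq.
have S0 : [set segp p q t | t in `[0, 1]] p.
  exists 0; first by rewrite /= in_itv /= lexx ler01.
  by rewrite /segp scale0r addr0.
have S1 : [set segp p q t | t in `[0, 1]] q.
  exists 1; first by rewrite /= in_itv /= lexx ler01.
  by rewrite /segp scale1r addrC subrK.
apply: (connected_component_max S0 _ (seg_conn p q)) => //.
move=> _ [t /= ht <-]; apply: DA; move: ht; rewrite in_itv /= => /andP [t0 t1].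
exact: hst.
Qed.

Lemma Dplus_star x r nu tau p q t : 0 < r ->
  Dplus x r nu tau p -> Dplus x r nu tau q -> 0 <= t -> t <= 1 ->
  Dplus x r nu tau (segp p q t).
Proof.
move=> r0 [/(eballE x r p r0) hp dp] [/(eballE x r q r0) hq dq] t0 t1.
have s1 : (segp p q t).1 = p.1 + t * (q.1 - p.1) by [].
have s2 : (segp p q t).2 = p.2 + t * (q.2 - p.2) by [].
split.
  apply/(eballE x r _ r0); rewrite s1 s2.
  have -> : p.1 + t * (q.1 - p.1) - x.1 = (p.1 - x.1) + t * ((q.1 - x.1) - (p.1 - x.1)) by ring.
  have -> : p.2 + t * (q.2 - p.2) - x.2 = (p.2 - x.2) + t * ((q.2 - x.2) - (p.2 - x.2)) by ring.
  move: hp hq; move: (p.1 - x.1) (p.2 - x.2) (q.1 - x.1) (q.2 - x.2) => u1 u2 v1 v2 hp hq.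
  set w1 := u1 + t * (v1 - u1); set w2 := u2 + t * (v2 - u2).
  have e : w1 * w1 + w2 * w2 = (1 - t) * (u1 * u1 + u2 * u2) + t * (v1 * v1 + v2 * v2)
     - t * (1 - t) * ((u1 - v1) * (u1 - v1) + (u2 - v2) * (u2 - v2)) by rewrite /w1 /w2; ring.
  rewrite e.
  have h1 : 0 <= t * (1 - t) * ((u1 - v1) * (u1 - v1) + (u2 - v2) * (u2 - v2)).
    apply: mulr_ge0; first by apply: mulr_ge0; lra.
    by apply: addr_ge0; rewrite -expr2 sqr_ge0.
  have h2 : (1 - t) * (u1 * u1 + u2 * u2) <= (1 - t) * (r * r).
    by apply: ler_wpM2l; [lra|exact: ltW].
  have h3 : t * (v1 * v1 + v2 * v2) <= t * (r * r).
    by apply: ler_wpM2l; [lra|exact: ltW].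
  have h4 : (1 - t) * (u1 * u1 + u2 * u2) + t * (v1 * v1 + v2 * v2) < r * r.
    have [tl|te] := ltP t 1.
      have : (1 - t) * (u1 * u1 + u2 * u2) < (1 - t) * (r * r).
        by rewrite ltr_pM2l //; lra.
      lra.
    have -> : t = 1 by lra.
    by rewrite subrr mul0r add0r mul1r.
  lra.
have dE : forall z, dot2 (sub2 z x) nu = (z.1 - x.1) * nu.1 + (z.2 - x.2) * nu.2 by [].
move: dp dq; rewrite !dE s1 s2 => dp dq.
have -> : (p.1 + t * (q.1 - p.1) - x.1) * nu.1 + (p.2 + t * (q.2 - p.2) - x.2) * nu.2
  = (1 - t) * ((p.1 - x.1) * nu.1 + (p.2 - x.2) * nu.2) + t * ((q.1 - x.1) * nu.1 + (q.2 - x.2) * nu.2) by ring.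
move: dp dq; move: ((p.1 - x.1) * nu.1 + (p.2 - x.2) * nu.2) ((q.1 - x.1) * nu.1 + (q.2 - x.2) * nu.2) => a b ha hb.
have [tl|te] := ltP t 1.
  have : 0 < (1 - t) * (a - tau) by apply: mulr_gt0; lra.
  have : 0 <= t * (b - tau) by apply: mulr_ge0; lra.
  nra.
have -> : t = 1 by lra.
by rewrite subrr mul0r add0r mul1r.
Qed.

Lemma Dminus_eq x r nu tau : Dminus x r nu tau = Dplus x r (- nu.1, - nu.2) tau.
Proof.
apply/seteqP; split => z [h1 h2]; split => //; move: h2;
  by rewrite /dot2 /= !mulrN -opprD.
Qed.

Lemma comp_eq (A C1 C2 : set (R * R)) q : is_component A C1 -> is_component A C2 -> C1 q -> C2 q -> C1 = C2.
Proof.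
move=> [p1 [_ ->]] [p2 [_ ->]] h1 h2.
by rewrite (same_connected_component h1) (same_connected_component h2).
Qed.

Arguments comp_eq {A C1 C2 q}.

Lemma comp_mono (A B : set (R * R)) p : A `<=` B -> connected_component A p `<=` connected_component B p.
Proof.
move=> AB; have [Ap|nAp] := pselect (A p).
  apply: connected_component_max.
  - exact: connected_component_refl.
  - exact: subset_trans (@connected_component_sub _ A p) AB.
  - exact: component_connected.
by rewrite connected_component_out.
Qed.

Lemma dotE z x nu : dot2 (sub2 z x) nu = (z.1 - x.1) * nu.1 + (z.2 - x.2) * nu.2.
Proof. by []. Qed.

Lemma keyG F c R0 x g : 0 < R0 -> 0 < g -> separates F c R0 -> F x -> eball c R0 x ->
  eball x (g * R0) `<=` eball c R0 -> beta F c R0 <= g / 4 -> separates F x (g * R0).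
Proof.
move=> R00 g0 [_ [nu0 [un0 [hW0 [C1 [C2 [hC1 [hC2 [neq [hs1 hs2]]]]]]]]]] Fx Bx sB hb.
set rho := g * R0; have rho0 : 0 < rho by rewrite mulr_gt0.
set b0 := beta F c R0.
have W0e : width F c R0 nu0 = b0 * R0.
  by rewrite /b0 -hW0 mulrC mulrA mulfV ?gt_eqF // mul1r.
have hb0 : b0 * R0 <= rho / 4.
  have : b0 * R0 <= g / 4 * R0 by rewrite ler_pM2r.
  rewrite /rho; lra.
have hd : `|dot2 (sub2 x c) nu0| <= b0 * R0 by rewrite -W0e; exact: W_ub.
have [nu [un [hWr hWs]]] := beta_att F x rho rho0.
set b := beta F x rho.
have hWb : width F x rho nu = b * rho by exact: hWs.
have hbs : b * rho <= rho / 2.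
  apply: le_trans (beta_W F x rho nu0 rho0 un0) _.
  apply: W_le; first lra.
  move=> y Fy By; have Byc := sB y By.
  have := W_ub nu0 R00 Fy Byc.
  have -> : dot2 (sub2 y x) nu0 = dot2 (sub2 y c) nu0 - dot2 (sub2 x c) nu0.
    by rewrite !dotE; ring.
  rewrite W0e => h; apply: le_trans (ler_normB _ _) _; lra.
have b_le : b <= 2^-1.
  by rewrite -(ler_pM2r rho0); lra.
have [w [w1 w2 w3]] := exists_w nu nu0 un un0.
set k := 9/10 * rho.
have k0 : 0 < k by rewrite /k; lra.
set zp : R * R := (x.1 + k * w.1, x.2 + k * w.2).
set zm : R * R := (x.1 - k * w.1, x.2 - k * w.2).
have Bzp : eball x rho zp.
  apply/(eballE x rho zp rho0) => /=.
  have -> : (x.1 + k * w.1 - x.1) * (x.1 + k * w.1 - x.1) + (x.2 + k * w.2 - x.2) * (x.2 + k * w.2 - x.2)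
    = k * k * (w.1 * w.1 + w.2 * w.2) by ring.
  rewrite w2 mulr1 /k; nra.
have Bzm : eball x rho zm.
  apply/(eballE x rho zm rho0) => /=.
  have -> : (x.1 - k * w.1 - x.1) * (x.1 - k * w.1 - x.1) + (x.2 - k * w.2 - x.2) * (x.2 - k * w.2 - x.2)
    = k * k * (w.1 * w.1 + w.2 * w.2) by ring.
  rewrite w2 mulr1 /k; nra.
have dzp : dot2 (sub2 zp x) nu = k * (3/5).
  by rewrite dotE /= -w1; ring.
have dzm : dot2 (sub2 zm x) nu = - (k * (3/5)).
  by rewrite dotE /= -w1; ring.
have kb : b * rho < k * (3/5) by rewrite /k; lra.
set A := eball x rho `\` F.
set bigA := eball c R0 `\` F.
have AB : A `<=` bigA by move=> z [Bz nFz]; split => //; exact: sB.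
have DpA : Dplus x rho nu (b * rho) `<=` A.
  move=> z [Bz dz]; split => // Fz.
  have := W_ub nu rho0 Fz Bz; rewrite hWb => h.
  have := ler_norm (dot2 (sub2 z x) nu); lra.
have DmA : Dminus x rho nu (b * rho) `<=` A.
  move=> z [Bz dz]; split => // Fz.
  have := W_ub nu rho0 Fz Bz; rewrite hWb => h.
  have := ler_norm (- dot2 (sub2 z x) nu); rewrite normrN; lra.
have Dp : Dplus x rho nu (b * rho) zp by split => //; rewrite dzp.
have Dm : Dminus x rho nu (b * rho) zm by split => //; rewrite dzm opprK.
set s := w.1 * nu0.1 + w.2 * nu0.2.
have dbp : dot2 (sub2 zp c) nu0 = dot2 (sub2 x c) nu0 + k * s.
  by rewrite !dotE /s /=; ring.
have dbm : dot2 (sub2 zm c) nu0 = dot2 (sub2 x c) nu0 - k * s.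
  by rewrite !dotE /s /=; ring.
have hdd := ler_norm (dot2 (sub2 x c) nu0).
have hdd' := ler_norm (- dot2 (sub2 x c) nu0); rewrite normrN in hdd'.
set K1 := connected_component A zp.
set K2 := connected_component A zm.
have key : forall C, is_component bigA C -> connected_component bigA zp zm -> C zp -> C zm.
  by move=> C [p [_ ->]] hz h; rewrite (same_connected_component h).
have hb0' : beta F c R0 * R0 <= rho / 4 by exact: hb0.
have hd' : `|dot2 (sub2 x c) nu0| <= beta F c R0 * R0 by exact: hd.
split; first exact: b_le.
exists nu; split => //; split => //.
exists K1, K2; split; first by exists zp; split => //; exact: DpA.
split; first by exists zm; split => //; exact: DmA.
split.
  move=> eK.
  have zmK1 : K1 zm by rewrite eK; apply: connected_component_refl; exact: DmA.
  have zmB : connected_component bigA zp zm by exact: (@comp_mono A bigA zp AB zm zmK1).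
  have ss : 9/25 <= s * s by exact: w3.
  have [s0|s0] := leP 0 s.
    have s35 : 3/5 <= s by nra.
    have ks : k * (3/5) <= k * s by rewrite ler_pM2l.
    have zpC1 : C1 zp.
      apply: hs1; split; first exact: sB.
      rewrite dbp; have kr : k = 9/10 * rho by []; lra.
    have zmC2 : C2 zm.
      apply: hs2; split; first exact: sB.
      rewrite dbm; have kr : k = 9/10 * rho by []; lra.
    exact: neq (comp_eq hC1 hC2 (key C1 hC1 zmB zpC1) zmC2).
  have s35 : s <= - (3/5) by nra.
  have ks : k * s <= k * (- (3/5)) by rewrite ler_pM2l.
  have zpC2 : C2 zp.
    apply: hs2; split; first exact: sB.
    rewrite dbp; have kr : k = 9/10 * rho by []; lra.
  have zmC1 : C1 zm.
    apply: hs1; split; first exact: sB.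
    rewrite dbm; have kr : k = 9/10 * rho by []; lra.
  exact: neq (comp_eq hC1 hC2 zmC1 (key C2 hC2 zmB zpC2)).
split.
  apply: star_comp; [exact: Dp|exact: DpA|].
  by move=> q t Dq t0 t1; exact: Dplus_star.
rewrite Dminus_eq; apply: star_comp.
- by rewrite -Dminus_eq.
- by rewrite -Dminus_eq.
- by move=> q t Dq t0 t1; apply: Dplus_star => //; rewrite -Dminus_eq.
Qed.

Lemma step_sep F x t s : 0 < s -> s <= t -> separates F x t -> F x ->
  beta F x t <= (s / t) / 4 -> separates F x s.
Proof.
move=> s0 st sep Fx hb.
have t0 : 0 < t by apply: lt_le_trans st.
have e : s / t * t = s by rewrite -mulrA mulVf ?gt_eqF // mulr1.
rewrite -e; apply: (keyG F x t x (s / t) t0 _ sep Fx _ _ hb).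
- by rewrite divr_gt0.
- apply/(eballE x t x t0); rewrite !subrr !mulr0 addr0; exact: mulr_gt0.
- rewrite e => z /(eballE x s z s0) h; apply/(eballE x t z t0).
  have : s * s <= t * t by apply: ler_pM; try exact: ltW.
  lra.
Qed.

Lemma two_pow_ge (a : R) : exists n : nat, a <= 2 ^+ n.
Proof.
have [a0|a0] := leP a 0; first by exists 0%N; rewrite expr0; lra.
exists (Num.Def.archi_bound a).
apply: (le_trans (ltW (archi_boundP (ltW a0)))).
rewrite -natrX ler_nat; apply: ltnW; exact: ltn_expl.
Qed.

End Aux.

Theorem lemma4p15 (R : realType) (x0 : R * R) (r0 : R) (E : set (R * R)) :
  0 < r0 ->
  rel_closed_in E (eball x0 r0) ->
  E x0 ->
  separates E x0 r0 ->
  (forall (x : R * R) (gamma : R),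
      E x -> eball x0 r0 x -> 0 < gamma ->
      eball x (gamma * r0) `<=` eball x0 r0 ->
      beta E x0 r0 <= gamma / 4 ->
      separates E x (gamma * r0)) /\
  (beta E x0 r0 <= 1 / 100 ->
   forall (x : R * R) (rx r : R),
      E x -> eball x0 (9 / 10 * r0) x ->
      r0 / 10 <= rx ->
      eball x rx `<=` eball x0 r0 ->
      0 < r -> r <= rx ->
      (forall t, r <= t -> t <= rx -> beta E x t <= 1 / 8) ->
      separates E x r).
Proof.
move=> r00 _ _ sep; split.
  by move=> x g Ex Bx g0 sB hb; exact: (@keyG R E x0 r0 x g r00 g0 sep Ex Bx sB hb).
move=> hb x rx r Ex Bx9 rxge sB r0' rrx hbeta.
have rx0 : 0 < rx by apply: lt_le_trans rrx.
have Bx : eball x0 r0 x.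
  move: Bx9; rewrite /eball => h; apply: lt_le_trans h _; lra.
have seprx : separates E x rx.
  have e : rx / r0 * r0 = rx by rewrite -mulrA mulVf ?gt_eqF // mulr1.
  rewrite -e; apply: (@keyG R E x0 r0 x (rx / r0) r00 _ sep Ex Bx _ _).
  - by rewrite divr_gt0.
  - by rewrite e.
  - have : 1 / 10 <= rx / r0 by rewrite ler_pdivlMr //; lra.
    lra.
have claim : forall n : nat, forall s, r <= s -> s <= rx -> rx <= 2 ^+ n * s ->
    separates E x s.
  elim => [|n IH] s rs srx hn.
    by rewrite expr0 mul1r in hn; have -> : s = rx by apply/eqP; rewrite eq_le srx hn.
  have s0 : 0 < s by apply: lt_le_trans rs.
  have [h2|h2] := leP rx (2 * s).
    apply: (@step_sep R E x rx s s0 srx seprx Ex).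
    have : 1 / 2 <= s / rx by rewrite ler_pdivlMr //; lra.
    have := hbeta rx (le_trans rs srx) (lexx _); lra.
  have sep2 : separates E x (2 * s).
    apply: IH; [lra|lra|by rewrite exprS -mulrA mulrCA in hn].
  apply: (@step_sep R E x (2 * s) s s0 _ sep2 Ex); first lra.
  have -> : s / (2 * s) = 1 / 2 by field; rewrite gt_eqF.
  have hh : beta E x (2 * s) <= 1 / 8 by apply: hbeta; lra.
  lra.
have [n hn] := @two_pow_ge R (rx / r).
apply: (claim n) => //.
by rewrite -ler_pdivrMr // mulrC.
Qed.
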